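(* Under the setting of the following context, if $\mathbf{E}:=[e_k(x_j)]_{j,k=1}^n$ is nonsingular, then $$\mathcal{E}(\mathcal{S}_{\mathcal{X}})-\mathcal{E}(\mathcal{S}_T)\le 2K_\Omega\sqrt{1-\frac{1}{\lambda_{\max}\big(K[\mathcal{X}]^T(\mathbf{E}\mathbf{E}^* )^{-1}\big)}}.$$
   Context: $X$ is a metric space, $K$ a reproducing kernel on $X$ with RKHS $\mathcal{H}_K$ (so $f(x)=(f,K(x,\cdot))_{\mathcal{H}_K}$), $\Omega\subseteq X$ compact with $K$ continuous on $\Omega\times\Omega$, $\mu$ a finite positive Borel measure on $\Omega$, $K_\Omega:=\int_\Omega K(t,t)\,d\mu(t)$, and for a closed subspace $V$ of $\mathcal{H}_K$, $\mathcal{E}(V):=\int_\Omega\operatorname{dist}^2(K(t,\cdot),V)\,d\mu(t)$. $T$ is the positive compact operator on $\mathcal{H}_K$ given by $(Tf)(x)=\int_\Omega f(t)K(t,x)\,d\mu(t)$; $e_1,\dots,e_n$ are orthonormal eigenfunctions of $T$ for its $n$ largest eigenvalues, assumed positive; $\mathcal{S}_T=\operatorname{span}\{e_1,\dots,e_n\}$. $\mathcal{X}=\{x_1,\dots,x_n\}\subseteq X$ with $K[\mathcal{X}]=[K(x_j,x_k)]_{j,k=1}^n$ nonsingular, $\mathcal{S}_{\mathcal{X}}=\operatorname{span}\{K(x_j,\cdot)\}$. With $f_j:=\sum_{k=1}^n\overline{e_k(x_j)}e_k$ and $h_j:=K(x_j,\cdot)-f_j$, the matrix $\mathbf{B}:=[(h_k,h_j)_{\mathcal{H}_K}]_{j,k=1}^n$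 is assumed nonsingular. $\lambda_{\max}$ denotes the largest eigenvalue, $M^T$ the transpose, $M^*$ the conjugate transpose. *)

(* Defs.v *)
From HB Require Import structures.
From mathcomp Require Import all_boot all_order all_algebra.
From mathcomp Require Import all_classical all_reals all_analysis.
From mathcomp.real_closed Require Import complex.

Set Implicit Arguments.
Unset Strict Implicit.
Unset Printing Implicit Defensive.

Import Order.TTheory GRing.Theory Num.Theory.
Import numFieldNormedType.Exports.

Local Open Scope classical_set_scope.
Local Open Scope ring_scope.

Definition cR {R : rcfType} (r : R) : R[i] := Complex r 0.

Notation Borel X := (g_sigma_algebraType (@open X)).

Definition Cint {d} {T : measurableType d} {R : realType}
  (mu : {measure set T -> \bar R}) (D : set T) (g : T -> R[i]) : R[i] :=
  Complex (Rintegral mu D (fun t => complex.Re (g t))) (Rintegral mu D (fun t => complex.Im (g t))).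

Definition inner_product {R : rcfType} {H : lmodType R[i]} (ip : H -> H -> R[i]) : Prop :=
  [/\ forall (a : R[i]) (u v w : H), ip (a *: u + v) w = a * ip u w + ip v w,
      forall u v : H, ip u v = (ip v u)^*,
      forall u : H, 0 <= ip u u &
      forall u : H, ip u u = 0 -> u = 0].

Definition ipnorm {R : rcfType} {H : lmodType R[i]} (ip : H -> H -> R[i]) (v : H) : R :=
  Num.sqrt (complex.Re (ip v v)).

Definition ip_complete {R : rcfType} {H : lmodType R[i]} (ip : H -> H -> R[i]) : Prop :=
  forall u : nat -> H,
    (forall eps : R, 0 < eps -> exists N : nat, forall m n : nat,
        (N <= m)%N -> (N <= n)%N -> ipnorm ip (u m - u n) < eps) ->
    exists l : H, forall eps : R, 0 < eps -> exists N : nat, forall n : nat,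
        (N <= n)%N -> ipnorm ip (u n - l) < eps.

Definition dist_span {R : realType} {H : lmodType R[i]} (ip : H -> H -> R[i])
  (v : H) (n : nat) (u : 'I_n -> H) : R :=
  inf [set ipnorm ip (v - \sum_(i < n) c i *: u i) | c in [set: 'I_n -> R[i]]].

(* The RKHS H_K is modelled as an abstract Hilbert space H whose elements are
   functions on X via f(x) := (f, kf x), where kf x = K(x, .).  The kernel is
   K(x, y) = K(x, .)(y) = (K(x, .), K(y, .)). *)
Definition kern {R : rcfType} {X : Type} {H : lmodType R[i]} (ip : H -> H -> R[i])
  (kf : X -> H) (x y : X) : R[i] := ip (kf x) (kf y).

(* Elements of H are genuine functions on X: determined by their values. *)
Definition functions_on {R : rcfType} {X : Type} {H : lmodType R[i]}
  (ip : H -> H -> R[i]) (kf : X -> H) : Prop :=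
  forall f : H, (forall x : X, ip f (kf x) = 0) -> f = 0.

(* T f = z f, where (Tf)(x) = \int_Omega f(t) K(t,x) dmu(t). *)
Definition T_eigen {R : realType} {X : ptopologicalType} {H : lmodType R[i]}
  (ip : H -> H -> R[i]) (kf : X -> H) (mu : {measure set (Borel X) -> \bar R})
  (Om : set X) (f : H) (z : R[i]) : Prop :=
  forall x : X,
    Cint mu Om (fun t : Borel X => ip f (kf t) * kern ip kf t x) = z * ip f (kf x).

Definition Err {R : realType} {X : ptopologicalType} {H : lmodType R[i]}
  (ip : H -> H -> R[i]) (kf : X -> H) (mu : {measure set (Borel X) -> \bar R})
  (Om : set X) (n : nat) (u : 'I_n -> H) : R :=
  Rintegral mu Om (fun t : Borel X => (dist_span ip (kf t) u) ^+ 2).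

Definition K_Om {R : realType} {X : ptopologicalType} {H : lmodType R[i]}
  (ip : H -> H -> R[i]) (kf : X -> H) (mu : {measure set (Borel X) -> \bar R}) (Om : set X) : R :=
  Rintegral mu Om (fun t : Borel X => complex.Re (kern ip kf t t)).

Definition Kmx {R : rcfType} {X : Type} {H : lmodType R[i]} (ip : H -> H -> R[i])
  (kf : X -> H) (n : nat) (x : 'I_n -> X) : 'M[R[i]]_n :=
  \matrix_(j, k) kern ip kf (x j) (x k).

Definition Emx {R : rcfType} {X : Type} {H : lmodType R[i]} (ip : H -> H -> R[i])
  (kf : X -> H) (n : nat) (e : 'I_n -> H) (x : 'I_n -> X) : 'M[R[i]]_n :=
  \matrix_(j, k) ip (e k) (kf (x j)).

Definition adjmx {R : rcfType} {n : nat} (A : 'M[R[i]]_n) : 'M[R[i]]_n :=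
  (map_mx (fun z => z^*) A)^T.

Definition hvec {R : rcfType} {X : Type} {H : lmodType R[i]} (ip : H -> H -> R[i])
  (kf : X -> H) (n : nat) (e : 'I_n -> H) (x : 'I_n -> X) (j : 'I_n) : H :=
  kf (x j) - \sum_(k < n) (ip (e k) (kf (x j)))^* *: e k.

Definition Bmx {R : rcfType} {X : Type} {H : lmodType R[i]} (ip : H -> H -> R[i])
  (kf : X -> H) (n : nat) (e : 'I_n -> H) (x : 'I_n -> X) : 'M[R[i]]_n :=
  \matrix_(j, k) ip (hvec ip kf e x k) (hvec ip kf e x j).

(* lam is the largest eigenvalue of A (all eigenvalues lie below lam in the
   partial order of C, i.e. are real and <= lam). *)
Definition is_lambda_max {R : rcfType} {n : nat} (A : 'M[R[i]]_n) (lam : R) : Prop :=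
  eigenvalue A (cR lam) /\ forall z : R[i], eigenvalue A z -> z <= cR lam.

(* Main.v *)
Require Import Defs.
From HB Require Import structures.
From mathcomp Require Import all_boot all_order all_algebra.
From mathcomp Require Import all_classical all_reals all_analysis.
From mathcomp.real_closed Require Import complex.
From mathcomp Require Import ring lra.
Import Order.TTheory GRing.Theory Num.Theory.
Import numFieldNormedType.Exports.
Local Open Scope classical_set_scope.
Local Open Scope ring_scope.



Section Mx.
Local Open Scope sesquilinear_scope.
Variable C : numClosedFieldType.

Lemma char_poly_tr n (A : 'M[C]_n) : char_poly A^T = char_poly A.
Proof.
rewrite /char_poly -det_tr; congr (\det _); apply/matrixP=> i j; rewrite !mxE.
by rewrite eq_sym.
Qed.

Lemma eigenvalue_tr n (A : 'M[C]_n) z : eigenvalue A^T z = eigenvalue A z.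
Proof. by rewrite !eigenvalue_root_char char_poly_tr. Qed.

Lemma adjM m n p (A : 'M[C]_(m, n)) (B : 'M[C]_(n, p)) :
  (A *m B)^t* = B^t* *m A^t*.
Proof. by rewrite trmx_mul map_mxM. Qed.

Lemma adjV n (A : 'M[C]_n) : (invmx A)^t* = invmx (A^t*).
Proof. by rewrite trmx_inv map_invmx. Qed.

Lemma mx_key n (K E : 'M[C]_n) (lmax : C) :
  K^t* = K -> E \in unitmx ->
  (forall z, eigenvalue (K^T *m invmx (E *m E^t*)) z -> z <= lmax) ->
  forall a : 'rV_n, let c := a *m invmx (map_mx Num.conj E) in
   (c *m K *m c^t*) 0 0 <= lmax * (a *m a^t*) 0 0.
Proof.
move=> hK hE hev a /=; set c := a *m invmx _.
set F := map_mx Num.conj E.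
have hF : F \in unitmx by rewrite /F map_unitmx.
have hFt : F^t* = E^T.
  by apply/matrixP=> i j; rewrite /F !mxE conjCK.
have hG : E^T \in unitmx by rewrite unitmx_tr.
set N := invmx F *m K *m invmx E^T.
have hN : N^t* = N.
  rewrite /N !adjM !adjV hK hFt mulmxA; congr (invmx _ *m _ *m _).
  by apply/matrixP=> i j; rewrite !mxE.
have Nnorm : N \is normalmx by apply/normalmxP; rewrite hN.
set P := spectralmx N; set d := spectral_diag N.
have hNP : N = invmx P *m diag_mx d *m P by apply/orthomx_spectralP.
have Pu : P \is unitarymx by apply: spectral_unitarymx.
have Punit : P \in unitmx by apply: spectral_unit.
have iP : invmx P = P^t* by apply: invmx_unitary.
have hQ : (E *m E^t*)^T = F *m E^T.
  by rewrite trmx_mul; congr (_ *m _); apply/matrixP=> i j; rewrite !mxE.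
have Qu : F *m E^T \in unitmx by rewrite unitmx_mul hF hG.
have hAT : (K^T *m invmx (E *m E^t*))^T = invmx (F *m E^T) *m K.
  by rewrite trmx_mul trmxK trmx_inv hQ.
have evN z : eigenvalue N z -> z <= lmax.
  move=> /eigenvalueP [v hv v0]; apply: hev; rewrite -eigenvalue_tr hAT.
  apply/eigenvalueP; exists (v *m E^T).
    have hw : v *m E^T *m invmx (F *m E^T) = v *m invmx F.
      have -> : v *m E^T = v *m invmx F *m (F *m E^T) by rewrite mulmxA mulmxKV.
      by rewrite mulmxK.
    rewrite mulmxA hw scalemxAl -hv /N !mulmxA.
    by rewrite mulmxKV.
  by apply: contra v0 => /eqP/(congr1 (mulmx^~ (invmx E^T))); rewrite mulmxK // mul0mx => ->.
have evd i : d 0 i <= lmax.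
  apply: evN; apply/eigenvalueP; exists (row i P).
    rewrite hNP rowE !mulmxA mulmxK //.
    by rewrite -[ 'e_i *m diag_mx d]rowE row_diag_mx -scalemxAl.
  apply/eqP => /(congr1 (mulmx^~ (invmx P))); rewrite -row_mul mulmxV // mul0mx.
  move/matrixP => /(_ 0 i); rewrite !mxE eqxx /= => /eqP; rewrite oner_eq0.
  done.
have hc : c *m K *m c^t* = a *m N *m a^t*.
  rewrite /c adjM adjV hFt /N !mulmxA.
  done.
rewrite hc hNP.
set y := a *m P^t*.
have -> : a *m (invmx P *m diag_mx d *m P) *m a^t* = y *m diag_mx d *m y^t*.
  by rewrite /y adjM trmxCK iP !mulmxA.
have -> : (a *m a^t*) = y *m y^t*.
  rewrite /y adjM trmxCK mulmxA -(mulmxA a) -iP mulVmx // mulmx1 //.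
rewrite mul_mx_diag !mxE mulr_sumr; apply: ler_sum => i _.
rewrite !mxE; set z := (\sum_j _).
have h0 : 0 <= z * z^* by rewrite -normCK exprn_ge0.
by rewrite mulrAC [lmax * _]mulrC ler_wpM2l // evd.
Qed.
End Mx.

Set Implicit Arguments.
Unset Strict Implicit.
Unset Printing Implicit Defensive.


Section Cx.
Variable R : rcfType.
Implicit Types z w : R[i].

Lemma conjCE z : z^* = (z^*)%C.
Proof.
have [->|z0] := eqVneq z 0; first by rewrite conjC0 conjc0.
by apply: (mulfI z0); rewrite -normCK sqr_normc.
Qed.

Lemma ReD z w : complex.Re (z + w) = complex.Re z + complex.Re w.
Proof. by case: z; case: w. Qed.
Lemma ReN z : complex.Re (- z) = - complex.Re z.
Proof. by case: z. Qed.
Lemma ReB z w : complex.Re (z - w) = complex.Re z - complex.Re w.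
Proof. by rewrite ReD ReN. Qed.
Lemma Re_conj z : complex.Re (z^*) = complex.Re z.
Proof. by rewrite conjCE; case: z. Qed.
Lemma ReMr (k : R) z : complex.Re ((cR k) * z) = k * complex.Re z.
Proof. by case: z => a b /=; rewrite !mul0r subr0. Qed.
Lemma conj_realC (k : R) : (cR k)^* = (cR k).
Proof. by rewrite conjCE /= oppr0. Qed.
Lemma Re_sum I (r : seq I) (P : pred I) (F : I -> R[i]) :
  complex.Re (\sum_(i <- r | P i) F i) = \sum_(i <- r | P i) complex.Re (F i).
Proof. by apply: (big_morph _ ReD). Qed.
Lemma realC_Re z : 0 <= z -> z = cR (complex.Re z).
Proof. case: z => a b; rewrite lecE /= => /andP[/eqP hb _]. by rewrite /cR hb. Qed.
Lemma Re_mulconj z : complex.Re (z * z^*) = complex.Re z ^+ 2 + complex.Im z ^+ 2.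
Proof. by rewrite conjCE; case: z => a b; simpc; rewrite /= !expr2. Qed.
Lemma cRB (a b : R) : cR (a - b) = cR a - cR b.
Proof. by rewrite /cR; simpc. Qed.
Lemma cR1 : cR (1 : R) = 1.
Proof. by []. Qed.
Lemma cRN (a : R) : cR (- a) = - cR a.
Proof. by rewrite /cR; simpc. Qed.
Lemma Re_ge0 z : 0 <= z -> 0 <= complex.Re z.
Proof. by case: z => a b; rewrite lecE /= => /andP[]. Qed.
End Cx.

Section IP.
Variables (R : realType) (H : lmodType R[i]) (ip : H -> H -> R[i]).
Hypothesis hip : inner_product ip.
Local Notation nr u := (complex.Re (ip u u)).

Lemma ipDl u v w : ip (u + v) w = ip u w + ip v w.
Proof. by case: hip => h _ _ _; rewrite -{1}[u]scale1r h mul1r. Qed.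
Lemma ip0l w : ip 0 w = 0.
Proof.
have := ipDl 0 0 w; rewrite addr0 => /(congr1 (fun t => t - ip 0 w)).
by rewrite subrr addrK => ->.
Qed.
Lemma ipZl a u w : ip (a *: u) w = a * ip u w.
Proof. by case: hip => h _ _ _; rewrite -[a *: u]addr0 h ip0l addr0. Qed.
Lemma ipNl u w : ip (- u) w = - ip u w.
Proof. by rewrite -scaleN1r ipZl mulN1r. Qed.
Lemma ipBl u v w : ip (u - v) w = ip u w - ip v w.
Proof. by rewrite ipDl ipNl. Qed.
Lemma ipC u v : ip u v = (ip v u)^*.
Proof. by case: hip. Qed.
Lemma ipDr u v w : ip u (v + w) = ip u v + ip u w.
Proof. by rewrite [LHS]ipC ipDl rmorphD [ip u v]ipC [ip u w]ipC. Qed.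
Lemma ipZr u a v : ip u (a *: v) = a^* * ip u v.
Proof. by rewrite [LHS]ipC ipZl rmorphM [ip u v]ipC. Qed.
Lemma ip0r u : ip u 0 = 0.
Proof. by rewrite ipC ip0l conjC0. Qed.
Lemma ipNr u v : ip u (- v) = - ip u v.
Proof. by rewrite [LHS]ipC ipNl rmorphN [ip u v]ipC. Qed.
Lemma ipBr u v w : ip u (v - w) = ip u v - ip u w.
Proof. by rewrite ipDr ipNr. Qed.
Lemma ip_suml I (r : seq I) (P : pred I) (F : I -> H) w :
  ip (\sum_(i <- r | P i) F i) w = \sum_(i <- r | P i) ip (F i) w.
Proof. by apply: (big_morph (fun u => ip u w) (fun u v => ipDl u v w) (ip0l w)). Qed.
Lemma ip_sumr I (r : seq I) (P : pred I) (F : I -> H) w :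
  ip w (\sum_(i <- r | P i) F i) = \sum_(i <- r | P i) ip w (F i).
Proof. by apply: (big_morph (fun u => ip w u) (fun u v => ipDr w u v) (ip0r w)). Qed.
Lemma ip_ge0 u : 0 <= ip u u.
Proof. by case: hip. Qed.
Lemma ip_real u : ip u u = cR (nr u).
Proof. exact/realC_Re/ip_ge0. Qed.
Lemma nr_ge0 u : 0 <= nr u.
Proof. exact/Re_ge0/ip_ge0. Qed.
Lemma nr_eq0 u : nr u = 0 -> u = 0.
Proof. by case: hip => _ _ _ h; move=> h0; apply: h; rewrite ip_real h0. Qed.
Lemma nrD u v : nr (u + v) = nr u + nr v + 2 * complex.Re (ip u v).
Proof.
rewrite ipDl !ipDr !ReD [ip v u]ipC Re_conj; lra.
Qed.
Lemma ReipZZ (k1 k2 : R) u v :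
  complex.Re (ip ((cR k1) *: u) ((cR k2) *: v)) = k1 * k2 * complex.Re (ip u v).
Proof. by rewrite ipZl ipZr conj_realC !ReMr mulrA. Qed.

Lemma nrZ (k : R) u : nr ((cR k) *: u) = k ^+ 2 * nr u.
Proof. by rewrite ReipZZ expr2. Qed.
Lemma nr_pyth u v : ip u v = 0 -> nr (u + v) = nr u + nr v.
Proof. by move=> h; rewrite nrD h /= mulr0 addr0. Qed.

Variables (n : nat) (e : 'I_n -> H).
Hypothesis he : forall j k, ip (e j) (e k) = (j == k)%:R.

Lemma ip_span_e (c : 'I_n -> R[i]) k : ip (\sum_j c j *: e j) (e k) = c k.
Proof.
rewrite ip_suml (bigD1 k) //= big1 ?addr0; first by rewrite ipZl he eqxx mulr1.
by move=> j /negbTE jk; rewrite ipZl he jk mulr0.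
Qed.

Lemma ip_orth_span w (c : 'I_n -> R[i]) :
  (forall k, ip w (e k) = 0) -> ip w (\sum_j c j *: e j) = 0.
Proof. by move=> h; rewrite ip_sumr big1 // => j _; rewrite ipZr h mulr0. Qed.

Lemma nr_span (c : 'I_n -> R[i]) :
  nr (\sum_j c j *: e j) = \sum_j complex.Re (c j * (c j)^*).
Proof.
rewrite ip_suml Re_sum; apply: eq_bigr => j _.
by rewrite ipZl ipC ip_span_e.
Qed.

Section Proj.
Variable v : H.
Let al k := ip v (e k).
Let u := \sum_k al k *: e k.
Let r := v - u.

Lemma r_orth k : ip r (e k) = 0.
Proof. by rewrite /r ipBl ip_span_e subrr. Qed.

Lemma nr_v : nr v = nr r + nr u.
Proof.
have -> : v = r + u by rewrite /r subrK.
by rewrite nr_pyth ?[r + u - u]addrK //; apply: ip_orth_span; exact: r_orth.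
Qed.

Lemma dist_e_ge (c : 'I_n -> R[i]) : nr r <= nr (v - \sum_j c j *: e j).
Proof.
have hs : \sum_j (al j - c j) *: e j = u - \sum_j c j *: e j.
  by rewrite /u -sumrB; apply: eq_bigr => j _; rewrite scalerBl.
have -> : v - \sum_j c j *: e j = r + \sum_j (al j - c j) *: e j.
  by rewrite hs /r addrA subrK.
rewrite nr_pyth; last by apply: ip_orth_span; exact: r_orth.
by rewrite lerDl nr_ge0.
Qed.

Variables (g : 'I_n -> H) (lmax : R).
Hypothesis key : forall a : 'I_n -> R[i], exists c : 'I_n -> R[i],
  (forall k, ip (\sum_j c j *: g j) (e k) = a k) /\
  nr (\sum_j c j *: g j) <= lmax * nr (\sum_k a k *: e k).

Lemma dist_g_le : exists c : 'I_n -> R[i],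
  nr (v - \sum_j c j *: g j) <= nr r + 2 * Num.sqrt (1 - 1 / lmax) * nr v.
Proof.
have [c [hc hW]] := key al.
set w0 := \sum_j c j *: g j in hc hW *.
have hq k : ip (w0 - u) (e k) = 0 by rewrite ipBl hc ip_span_e subrr.
set q := w0 - u in hq.
have huq : ip u q = 0 by rewrite ipC ip_orth_span // conjC0.
have hw : w0 = u + q by rewrite /q addrC subrK.
have hW' : nr w0 = nr u + nr q by rewrite hw nr_pyth.
rewrite -/u in hW.
have hv := nr_v.
have U0 := nr_ge0 u; have Q0 := nr_ge0 q; have r0 := nr_ge0 r.
set U := nr u in hW hW' hv U0 *; set Q := nr q in hW' Q0 *.
set rr := nr r in hv r0 *.
set s := Num.sqrt (1 - 1 / lmax).
have s0 : 0 <= s := sqrtr_ge0 _.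
have [Ule|Ugt] := leP U 0.
  exists (fun _ => 0); rewrite big1 ?subr0 => [|j _]; last by rewrite scale0r.
  have := mulr_ge0 s0 (nr_ge0 v); rewrite hv; lra.
have l1 : 1 <= lmax.
  have : U * 1 <= U * lmax by lra.
  by rewrite ler_pM2l.
set p := lmax^-1.
have hp : p * lmax = 1 by rewrite mulVf // gt_eqF // (lt_le_trans ltr01 l1).
have p0 : 0 < p by rewrite invr_gt0 (lt_le_trans ltr01 l1).
have p1 : p <= 1 by rewrite invf_le1 // (lt_le_trans ltr01 l1).
have hs2 : s ^+ 2 = 1 - p by rewrite /s mul1r sqr_sqrtr // subr_ge0.
have s1 : s <= 1.
  have : s ^+ 2 <= 1 by rewrite hs2; lra.
  move=> h; nra.
exists (fun j => cR p * c j).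
have -> : \sum_j (cR p * c j) *: g j = cR p *: w0.
  by rewrite scaler_sumr; apply: eq_bigr => j _; rewrite scalerA.
set z := cR (1 - p) *: u + cR (- p) *: q.
have hz : v - cR p *: w0 = r + z.
  rewrite hw /z /r cRB cRN cR1 scalerBl scale1r scalerDr scaleNr opprD.
  by rewrite -!addrA addKr.
have hnz : nr z = (1 - p) ^+ 2 * U + p ^+ 2 * Q.
  by rewrite /z nrD !nrZ ReipZZ huq /= mulr0 mulr0 addr0 sqrrN.
have hnz2 : nr z <= s ^+ 2 * U.
  rewrite hnz hs2.
  have hQ : Q <= (lmax - 1) * U by lra.
  have : p ^+ 2 * Q <= p ^+ 2 * ((lmax - 1) * U) by rewrite ler_wpM2l // exprn_ge0 // ltW.
  have -> : p ^+ 2 * ((lmax - 1) * U) = p * (p * lmax) * U - p ^+ 2 * U by ring.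
  rewrite hp mulr1 => h.
  have -> : (1 - p) ^+ 2 * U + p ^+ 2 * Q <= (1 - p) * U = ((1 - p) ^+ 2 * U + p ^+ 2 * Q <= (1 - p) * U) by [].
  nra.
have hcross : 2 * complex.Re (ip r z) <= s * (rr + U).
  have [s00|spos] := eqVneq s 0.
    have : nr z <= 0 by rewrite s00 expr0n /= mul0r in hnz2.
    move=> hz0; have /nr_eq0 -> : nr z = 0 by apply/le_anti; rewrite hz0 nr_ge0.
    by rewrite ip0r /= mulr0 s00 mul0r.
  have spos' : 0 < s by rewrite lt_def spos s0.
  have := nr_ge0 (cR s *: r + cR (-1) *: z).
  rewrite nrD !nrZ ReipZZ -/rr.
  have hnz0 := nr_ge0 z.
  nra.
rewrite hz nrD -/rr hv.
have : s ^+ 2 * U <= s * U by rewrite expr2 -mulrA ler_piMl // mulr_ge0.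
have := mulr_ge0 s0 r0.
lra.
Qed.

End Proj.
End IP.

Section DS.
Variables (R : realType) (H : lmodType R[i]) (ip : H -> H -> R[i]).
Hypothesis hip : inner_product ip.
Local Notation nr u := (complex.Re (ip u u)).

Lemma ds_lb (v : H) n (g : 'I_n -> H) (c : 'I_n -> R[i]) :
  dist_span ip v g <= ipnorm ip (v - \sum_i c i *: g i).
Proof.
apply: ge_inf; last by exists c.
by exists 0 => _ [c' _ <-]; apply: sqrtr_ge0.
Qed.

Lemma ds_ge0 (v : H) n (g : 'I_n -> H) : 0 <= dist_span ip v g.
Proof.
apply: lb_le_inf; first by exists (ipnorm ip (v - \sum_i 0 *: g i)), (fun _ => 0).
by move=> _ [c' _ <-]; apply: sqrtr_ge0.
Qed.

Lemma ds_sq_le (v : H) n (g : 'I_n -> H) (c : 'I_n -> R[i]) :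
  dist_span ip v g ^+ 2 <= nr (v - \sum_i c i *: g i).
Proof.
have h := ds_lb v g c; have h0 := ds_ge0 v g.
rewrite -[X in _ <= X](@sqr_sqrtr _ (nr _)); last exact: nr_ge0.
by rewrite !expr2 ler_pM.
Qed.

Lemma ds_e (v : H) n (e : 'I_n -> H) :
  (forall j k, ip (e j) (e k) = (j == k)%:R) ->
  dist_span ip v e ^+ 2 = nr (v - \sum_k ip v (e k) *: e k).
Proof.
move=> he.
suff -> : dist_span ip v e = Num.sqrt (nr (v - \sum_k ip v (e k) *: e k)).
  by rewrite sqr_sqrtr // nr_ge0.
apply/le_anti/andP; split; first exact: (ds_lb v e (fun k => ip v (e k))).
apply: lb_le_inf; first by exists (ipnorm ip (v - \sum_i 0 *: e i)), (fun _ => 0).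
move=> _ [c _ <-]; rewrite /ipnorm ler_sqrt ?nr_ge0 //.
exact: (dist_e_ge hip he).
Qed.
End DS.

Section Bessel.
Variables (R : realType) (H : lmodType R[i]) (ip : H -> H -> R[i]).
Hypothesis hip : inner_product ip.
Local Notation nr u := (complex.Re (ip u u)).

Lemma ImB (z w : R[i]) : complex.Im (z - w) = complex.Im z - complex.Im w.
Proof. by case: z; case: w. Qed.

Lemma Re_mulconj_ge0 (z : R[i]) : 0 <= complex.Re (z * z^*).
Proof. by rewrite Re_mulconj addr_ge0 // sqr_ge0. Qed.

Lemma bessel1 n (e : 'I_n -> H) (he : forall j k, ip (e j) (e k) = (j == k)%:R) w k :
  complex.Re (ip w (e k) * (ip w (e k))^*) <= nr w.
Proof.
rewrite (nr_v hip he w) (nr_span hip he) [X in _ <= _ + X](bigD1 k) //=.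
have := nr_ge0 hip (w - \sum_k0 ip w (e k0) *: e k0).
have : 0 <= \sum_(i < n | i != k) complex.Re (ip w (e i) * (ip w (e i))^*).
  by apply: sumr_ge0 => i _; apply: Re_mulconj_ge0.
lra.
Qed.

Lemma nr_diff a b : nr (a - b) = nr a - complex.Re (ip a b) - complex.Re (ip b a) + nr b.
Proof. rewrite (ipBl hip) !(ipBr hip) !ReB; lra. Qed.
End Bessel.


Lemma within_pair (T : topologicalType) (A : set T) (t : T) (g1 g2 : T -> T) :
  (forall s, A s -> A (g1 s)) -> (forall s, A s -> A (g2 s)) ->
  g1 @ within A (nbhs t) --> t -> g2 @ within A (nbhs t) --> t ->
  (fun s => (g1 s, g2 s)) @ within A (nbhs t) --> within (A `*` A) (nbhs (t, t)).
Proof.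
move=> h1 h2 c1 c2.
have c : (fun s => (g1 s, g2 s)) @ within A (nbhs t) --> (t, t).
  by apply: cvg_pair.
move=> W /= hW.
have hA : \forall s \near within A (nbhs t), A s.
  exact: near_withinT.
have := c _ hW; rewrite /= nbhs_simpl => hc.
move: hA hc; apply: filterS2 => s As; apply.
by split; [apply: h1 | apply: h2].
Qed.

Section Wcont.
Variables (R : realType) (X : ptopologicalType) (Om : set X).
Definition wcont (f : X -> R) := forall t, Om t -> f @ within Om (nbhs t) --> f t.

Lemma wcontD f g : wcont f -> wcont g -> wcont (fun t => f t + g t).
Proof. by move=> hf hg t Ot; apply: cvgD; [apply: hf | apply: hg]. Qed.
Lemma wcontN f : wcont f -> wcont (fun t => - f t).
Proof. by move=> hf t Ot; apply: cvgN; apply: hf. Qed.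
Lemma wcontB f g : wcont f -> wcont g -> wcont (fun t => f t - g t).
Proof. by move=> hf hg; apply: wcontD => //; apply: wcontN. Qed.
Lemma wcontM f g : wcont f -> wcont g -> wcont (fun t => f t * g t).
Proof. by move=> hf hg t Ot; apply: cvgM; [apply: hf | apply: hg]. Qed.
Lemma wcont_cst c : wcont (fun _ => c).
Proof. by move=> t Ot; apply: cvg_cst. Qed.
Lemma wcont_sum I (r : seq I) (f : I -> X -> R) :
  (forall i, wcont (f i)) -> wcont (fun t => \sum_(i <- r) f i t).
Proof.
move=> hf; elim: r => [|x r IH].
  have -> : (fun t => \sum_(i <- [::]) f i t) = (fun _ => 0) by apply/funext => t; rewrite big_nil.
  exact: wcont_cst.
have -> : (fun t => \sum_(i <- x :: r) f i t) = (fun t => f x t + \sum_(i <- r) f i t).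
  by apply/funext => t; rewrite big_cons.
exact: wcontD.
Qed.

Lemma wcont_within f : wcont f -> {within Om, continuous f}.
Proof. by move=> hf; apply/subspace_continuousP. Qed.

Lemma wcont_sq_bound (h : X -> R) (G : X -> X -> R) :
  (forall t, Om t -> (fun s => G s t) @ within Om (nbhs t) --> 0) ->
  (forall s t, Om s -> Om t -> (h s - h t) ^+ 2 <= G s t) -> wcont h.
Proof.
move=> hG hb t Ot; apply/cvgrPdist_lt => eps eps0.
have e2 : 0 < eps ^+ 2 by rewrite exprn_gt0.
have := hG t Ot; move/cvgrPdist_lt => /(_ (eps ^+ 2) e2) hN.
have hA : \forall s \near within Om (nbhs t), Om s by exact: near_withinT.
move: hA hN; apply: filterS2 => s Os; rewrite sub0r normrN => hlt.
have h1 := hb s t Os Ot.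
have h2 : (h t - h s) ^+ 2 < eps ^+ 2.
  by rewrite -sqrrN opprB; apply: le_lt_trans h1 (le_lt_trans (ler_norm _) hlt).
have hx : `|h t - h s| ^+ 2 < eps ^+ 2 by rewrite real_normK // num_real.
have := normr_ge0 (h t - h s); nra.
Qed.
End Wcont.

Lemma cont_meas (R : realType) (X : ptopologicalType) (Om : set X) (f : X -> R) :
  closed Om -> {within Om, continuous f} -> measurable_fun (Om : set (Borel X)) f.
Proof.
move=> cOm cf.
have mOm : measurable (Om : set (Borel X)).
  rewrite -[Om]setCK; apply: measurableC; apply: sub_sigma_algebra.
  exact: closed_openC.
apply: (@measurability _ _ _ _ _ _ (measurable_realfun.RGenOInfty.G (R:=R))).
  exact: measurable_realfun.RGenOInfty.measurableE.
move=> _ [_ [x ->] <-].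
have /continuousP := cf.
move=> /(_ `]x, +oo[%classic (rray_open _)) /open_subspaceP [V oV hV].
rewrite setIC -hV setIC; apply: measurableI => //.
exact: sub_sigma_algebra.
Qed.


Section Int.
Context d (T : measurableType d) (R : realType).
Variable mu : {finite_measure set T -> \bar R}.

Lemma ge0_le_integral_nm (D : set T) (f1 f2 : T -> \bar R) :
  (forall x, D x -> (0 <= f1 x)%E) -> (forall x, D x -> (f1 x <= f2 x)%E) ->
  (\int[mu]_(x in D) f1 x <= \int[mu]_(x in D) f2 x)%E.
Proof.
move=> h0 h12.
have h20 x : D x -> (0 <= f2 x)%E by move=> Dx; exact: le_trans (h0 _ Dx) (h12 _ Dx).
rewrite !ge0_integralE //; apply: ereal_sup_le => _ [h hh <-]; exists h => //= x.
apply: le_trans (hh x) _; rewrite /patch; case: ifP => // /set_mem; exact: h12.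
Qed.

Lemma int_main (D : set T) (a b k : T -> R) (s : R) :
  measurable D -> measurable_fun D b -> measurable_fun D k ->
  [bounded b x | x in D] -> [bounded k x | x in D] -> 0 <= s ->
  (forall t, D t -> 0 <= a t) -> (forall t, D t -> a t <= b t + s * k t) ->
  Rintegral mu D a <= Rintegral mu D b + s * Rintegral mu D k.
Proof.
move=> mD mb mk bb bk s0 a0 ab.
have fD : (mu D < +oo)%E by rewrite ltey_eq fin_num_measure.
have ib := measurable_bounded_integrable mD fD mb bb.
have ik := measurable_bounded_integrable mD fD mk bk.
have isk : mu.-integrable D (EFin \o (fun t => s * k t)) := integrableZl mD s ik.
have ig : mu.-integrable D (EFin \o (fun t => b t + s * k t)) := integrableD mD ib isk.
rewrite -RintegralZl // -RintegralD //.
rewrite /Rintegral; apply: fine_le; last first.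
  by apply: ge0_le_integral_nm => t Dt; rewrite lee_fin ?a0 ?ab.
  exact: integrable_fin_num.
rewrite ge0_fin_numE; last by apply: integral_ge0 => t Dt; rewrite lee_fin a0.
apply: le_lt_trans (ge0_le_integral_nm (f2 := fun t => (b t + s * k t)%:E) _ _) _.
- by move=> t Dt; rewrite lee_fin a0.
- by move=> t Dt; rewrite lee_fin ab.
- by have := integrable_fin_num mD ig; rewrite fin_numE => /andP[_ /eqP]; rewrite ltey => /eqP.
Qed.
End Int.


Section Ker.
Variables (R : realType) (X : ptopologicalType) (H : lmodType R[i]) (ip : H -> H -> R[i])
  (kf : X -> H) (Om : set X).
Hypothesis hip : inner_product ip.
Hypothesis hK : {within Om `*` Om, continuous (fun p : X * X => complex.Re (kern ip kf p.1 p.2))}.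
Local Notation F a b := (complex.Re (ip (kf a) (kf b))).

Lemma F_at t (g1 g2 : X -> X) : Om t ->
  (forall s, Om s -> Om (g1 s)) -> (forall s, Om s -> Om (g2 s)) ->
  g1 @ within Om (nbhs t) --> t -> g2 @ within Om (nbhs t) --> t ->
  (fun s => F (g1 s) (g2 s)) @ within Om (nbhs t) --> F t t.
Proof.
move=> Ot h1 h2 c1 c2.
have hc := (subspace_continuousP _ _).1 hK (t, t) (conj Ot Ot).
exact: (cvg_comp _ _ (within_pair h1 h2 c1 c2) hc).
Qed.

Lemma cid (t : X) : (fun s : X => s) @ within Om (nbhs t) --> t.
Proof. by apply: cvg_within_filter; exact: cvg_id. Qed.

Lemma kd_wcont : wcont Om (fun t => F t t).
Proof. by move=> t Ot; apply: F_at => //; exact: cid. Qed.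

Lemma G_to0 (t : X) : Om t ->
  (fun s => F s s - F s t - F t s + F t t) @ within Om (nbhs t) --> 0.
Proof.
move=> Ot.
have cc : (fun _ : X => t) @ within Om (nbhs t) --> t by apply: cvg_cst.
have c1 := F_at (g1 := id) (g2 := id) Ot (fun _ h => h) (fun _ h => h) (@cid t) (@cid t).
have c2 := F_at (g1 := id) (g2 := fun _ => t) Ot (fun _ h => h) (fun _ _ => Ot) (@cid t) cc.
have c3 := F_at (g1 := fun _ => t) (g2 := id) Ot (fun _ _ => Ot) (fun _ h => h) cc (@cid t).
have FF : Filter (within Om (nbhs t)) by apply: within_filter.
have := @cvgD _ _ _ _ FF _ _ _ _ (@cvgB _ _ _ _ FF _ _ _ _ (@cvgB _ _ _ _ FF _ _ _ _ c1 c2) c3)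
  (@cvg_cst _ (F t t) _ _ FF).
by rewrite subrr sub0r addNr.
Qed.

Variables (n : nat) (e : 'I_n -> H).
Hypothesis he : forall j k, ip (e j) (e k) = (j == k)%:R.

Lemma phi_wcont k (f : R[i] -> R) :
  (forall z w, (f z - f w) ^+ 2 <= complex.Re ((z - w) * (z - w)^*)) ->
  wcont Om (fun t => f (ip (kf t) (e k))).
Proof.
move=> hf; apply: (wcont_sq_bound (G := fun s t => F s s - F s t - F t s + F t t)).
  exact: G_to0.
move=> s t Os Ot; apply: le_trans (hf _ _) _.
rewrite -(ipBl hip) -(nr_diff hip); exact: (bessel1 hip he).
Qed.

Lemma Re_diff_sq (z w : R[i]) : (complex.Re z - complex.Re w) ^+ 2 <= complex.Re ((z - w) * (z - w)^*).
Proof. rewrite Re_mulconj ReB ImB; have := sqr_ge0 (complex.Im z - complex.Im w); lra. Qed.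
Lemma Im_diff_sq (z w : R[i]) : (complex.Im z - complex.Im w) ^+ 2 <= complex.Re ((z - w) * (z - w)^*).
Proof. rewrite Re_mulconj ReB ImB; have := sqr_ge0 (complex.Re z - complex.Re w); lra. Qed.

Definition bfun t := F t t - \sum_k (complex.Re (ip (kf t) (e k)) ^+ 2 + complex.Im (ip (kf t) (e k)) ^+ 2).

Lemma bfun_wcont : wcont Om bfun.
Proof.
apply: wcontB; first exact: kd_wcont.
apply: wcont_sum => k; apply: wcontD; rewrite /GRing.exp /=; apply: wcontM.
- exact: (phi_wcont (f := @complex.Re R) Re_diff_sq).
- exact: (phi_wcont (f := @complex.Re R) Re_diff_sq).
- exact: (phi_wcont (f := @complex.Im R) Im_diff_sq).
- exact: (phi_wcont (f := @complex.Im R) Im_diff_sq).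
Qed.

Lemma bfunE t : dist_span ip (kf t) e ^+ 2 = bfun t.
Proof.
rewrite (ds_e hip _ he) /bfun (nr_v hip he (kf t)) (nr_span hip he).
have -> : \sum_j complex.Re (ip (kf t) (e j) * (ip (kf t) (e j))^*) =
  \sum_k (complex.Re (ip (kf t) (e k)) ^+ 2 + complex.Im (ip (kf t) (e k)) ^+ 2).
  by apply: eq_bigr => j _; exact: Re_mulconj.
lra.
Qed.
End Ker.

Unset Implicit Arguments.


Lemma wbounded (R : realType) (X : ptopologicalType) (Om : set X) (f : X -> R) :
  {within Om, continuous f} -> compact Om -> [bounded f x | x in Om].
Proof.
move=> hf hc.
have hb : [bounded x | x in f @` Om] := compact_bounded (continuous_compact hf hc).
move: hb; rewrite /bounded_near => hb.
move: hb; apply: filterS => M /= hM y Oy; apply: hM; by exists y.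
Qed.

Lemma adjmxE (R : rcfType) n (A : 'M[R[i]]_n) : adjmx A = (A ^t*)%sesqui.
Proof. by apply/matrixP => i j; rewrite !mxE. Qed.

Lemma cRM (R : rcfType) (a b : R) : cR a * cR b = cR (a * b).
Proof. by rewrite /cR; simpc. Qed.

Theorem theorem4p3 (R : realType) (X : pseudoPMetricType R)
  (H : lmodType R[i]) (ip : H -> H -> R[i]) (kf : X -> H)
  (Om : set X) (mu : {finite_measure set (Borel X) -> \bar R})
  (n : nat) (lam : 'I_n -> R) (e : 'I_n -> H) (x : 'I_n -> X) (lmax : R) :
  hausdorff_space X ->
  inner_product ip -> ip_complete ip -> functions_on ip kf ->
  compact Om ->
  {within Om `*` Om, continuous (fun p : X * X => complex.Re (kern ip kf p.1 p.2))} ->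
  {within Om `*` Om, continuous (fun p : X * X => complex.Im (kern ip kf p.1 p.2))} ->
  (* e_1..e_n orthonormal eigenfunctions of T for its n largest eigenvalues, all positive *)
  (forall j k : 'I_n, ip (e j) (e k) = (j == k)%:R) ->
  (forall k : 'I_n, 0 < lam k) ->
  (forall k : 'I_n, T_eigen ip kf mu Om (e k) (cR (lam k))) ->
  (forall (f : H) (z : R[i]), f != 0 -> (forall k : 'I_n, ip f (e k) = 0) ->
     T_eigen ip kf mu Om f z -> forall k : 'I_n, z <= cR (lam k)) ->
  Kmx ip kf x \in unitmx ->
  Bmx ip kf e x \in unitmx ->
  Emx ip kf e x \in unitmx ->
  is_lambda_max ((Kmx ip kf x)^T *m invmx (Emx ip kf e x *m adjmx (Emx ip kf e x))) lmax ->
  Err ip kf mu Om (fun j => kf (x j)) - Err ip kf mu Om e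
    <= 2 * K_Om ip kf mu Om * Num.sqrt (1 - 1 / lmax).
Proof.
move=> hX hip _ _ hcomp hRe _ he _ _ _ _ _ hEu [_ hevmax].
set g := fun j => kf (x j).
set E := Emx ip kf e x; set K := Kmx ip kf x.
set s := Num.sqrt (1 - 1 / lmax).
have key : forall a : 'I_n -> R[i], exists c : 'I_n -> R[i],
    (forall k, ip (\sum_j c j *: g j) (e k) = a k) /\
    complex.Re (ip (\sum_j c j *: g j) (\sum_j c j *: g j)) <=
      lmax * complex.Re (ip (\sum_k a k *: e k) (\sum_k a k *: e k)).
  move=> a.
  set ar := \row_k a k.
  set F := map_mx Num.conj E.
  have hF : F \in unitmx by rewrite /F map_unitmx.
  set cr := ar *m invmx F.
  exists (fun j => cr 0 j); split.
    move=> k.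
    have : (cr *m F) 0 k = a k by rewrite /cr mulmxKV // mxE.
    rewrite mxE => <-; rewrite (ip_suml hip); apply: eq_bigr => j _.
    by rewrite (ipZl hip) /F /E /Emx !mxE [in LHS](ipC hip).
  have hK : (K ^t*)%sesqui = K.
    by apply/matrixP => i j; rewrite /K /Kmx !mxE /kern [in RHS](ipC hip).
  have hev z : eigenvalue (K^T *m invmx (E *m (E ^t*)%sesqui)) z -> z <= cR lmax.
    by rewrite -adjmxE; exact: hevmax.
  have := @mx_key _ _ K E (cR lmax) hK hEu hev ar; rewrite /= -/F -/cr.
  set w0 := \sum_j cr 0 j *: g j.
  have e1 : ip w0 w0 = (cr *m K *m (cr ^t*)%sesqui) 0 0.
    rewrite !mxE (ip_suml hip).
    under eq_bigr do rewrite (ipZl hip) (ip_sumr hip) mulr_sumr.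
    rewrite exchange_big /=; apply: eq_bigr => i _; rewrite !mxE mulr_suml.
    apply: eq_bigr => j _; rewrite (ipZr hip) !mxE /kern /g; ring.
  have e2 : ip (\sum_k a k *: e k) (\sum_k a k *: e k) = (ar *m (ar ^t*)%sesqui) 0 0.
    rewrite !mxE (ip_suml hip); apply: eq_bigr => j _.
    by rewrite (ipZl hip) [in LHS](ipC hip) (ip_span_e hip he) !mxE.
  rewrite -e1 -e2 (ip_real hip w0) (ip_real hip (\sum_k a k *: e k)) cRM.
  by rewrite lecE /= eqxx.
have pw t : dist_span ip (kf t) g ^+ 2 <=
    bfun ip kf e t + (2 * s) * complex.Re (kern ip kf t t).
  have [c hc] := dist_g_le hip he (kf t) key.
  apply: le_trans (ds_sq_le hip (kf t) g c) _.
  rewrite -(bfunE kf hip he t) (ds_e hip _ he) /kern.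
  rewrite -/s in hc; lra.
have cOm : closed Om := compact_closed hX hcomp.
have mOm : measurable (Om : set (Borel X)).
  rewrite -[Om]setCK; apply: measurableC; apply: sub_sigma_algebra.
  exact: closed_openC.
have cb := wcont_within (bfun_wcont hip hRe he).
have ck := wcont_within (kd_wcont hRe).
have s0 : 0 <= 2 * s by rewrite mulr_ge0 // sqrtr_ge0.
have := int_main mu mOm (@cont_meas _ _ _ _ cOm cb) (@cont_meas _ _ _ _ cOm ck)
  (@wbounded _ _ _ _ cb hcomp) (@wbounded _ _ _ _ ck hcomp) s0
  (a := fun t => dist_span ip (kf t) g ^+ 2) (fun t _ => sqr_ge0 _) (fun t _ => pw t).
rewrite /Err /K_Om.
have -> : (fun t : Borel X => dist_span ip (kf t) e ^+ 2) = bfun ip kf e.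
  by apply/funext => t; rewrite (bfunE kf hip he).
rewrite /kern; lra.
Qed.
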